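(* The vector space $A$, with $b\cdot a=ba$ ($b\in B$, $a\in A$), coaction $\delta(a)=a_{(1)}\otimes\pi_C(a_{(2)})$, and inner product $\langle a,a'\rangle=\Phi_A(a^*a')$, is a unitary DK-representation, i.e. an object of ${}_B\mathrm{Rep}^C$.
   Context: $A$ is a CQG Hopf $*$-algebra: a complex Hopf algebra $(A,\Delta_A,\varepsilon_A,S_A)$ with anti-linear involution making it a $*$-algebra with $\Delta_A$ a $*$-homomorphism, admitting a state $\Phi_A$ with $(\Phi_A\otimes\mathrm{id})\Delta_A(a)=\Phi_A(a)1=(\mathrm{id}\otimes\Phi_A)\Delta_A(a)$. $B\subseteq A$ is a unital right coideal $*$-subalgebra ($\Delta_A(B)\subseteq B\odot A$), $B_+=B\cap\ker\varepsilon_A$, $C=A/AB_+$ with quotient map $\pi_C$; $C$ is a coalgebra (comultiplication induced by $\Delta_A$), a left $A$-module by $a\cdot\pi_C(a')=\pi_C(aa')$, with involution $\pi_C(a)^\dagger=\pi_C(S_A(a)^* )$. ${}_B\mathrm{Rep}^C$: left $B$-modules $V$ with right $C$-comodule structure $v\mapsto v_{(0)}\otimes v_{(1)}$ satisfying $(bv)_{(0)}\otimes(bv)_{(1)}=b_{(1)}v_{(0)}\otimes b_{(2)}\cdot v_{(1)}$, which are pre-Hilbert spaces with $\langle v,bw\rangle=\langle b^*v,w\rangle$ and $\langle v,w_{(0)}\rangle w_{(1)}=\langle v_{(0)},w\rangle v_{(1)}^\dagger$. *)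

(* Defs.v *)
From mathcomp Require Import all_boot all_order all_algebra.
From mathcomp Require Import reals complex.
Set Implicit Arguments. Unset Strict Implicit. Unset Printing Implicit Defensive.
Import Order.TTheory GRing.Theory Num.Theory.
Local Open Scope ring_scope.

(* * An element of an algebraic tensor product  V (x) W  is represented by a *)
(*   finite list  [:: (v_1,w_1); ...; (v_n,w_n)]  standing for               *)
(*   sum_i v_i (x) w_i.  Two such lists denote the same tensor iff all       *)
(*   products of linear functionals  f (x) g  agree on them (over a field    *)
(*   this is exactly equality in V (x) W).                                   *)
(* * Triple tensors are compared in the same way with  f (x) g (x) h.        *)
(* * The quotient  C = A / A B_+  is represented by A itself; a linear       *)
(*   functional on C is a linear functional on A vanishing on A B_+.         *)

Section Defs.
Variable R : realType.
Local Notation K := (R[i]).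

Definition lin_fun (V : lmodType K) (f : V -> K) : Prop :=
  forall (a : K) (u v : V), f (a *: u + v) = a * f u + f v.

Definition teq (V W : lmodType K) (s t : seq (V * W)) : Prop :=
  forall (f : V -> K) (g : W -> K), lin_fun f -> lin_fun g ->
    \sum_(x <- s) f x.1 * g x.2 = \sum_(x <- t) f x.1 * g x.2.

Definition tscale (V W : lmodType K) (k : K) (s : seq (V * W)) : seq (V * W) :=
  [seq (k *: x.1, x.2) | x <- s].

Variable A : algType K.

Definition is_CQG_Hopf_star (Delta : A -> seq (A * A)) (eps : A -> K)
    (S : A -> A) (star : A -> A) (Phi : A -> K) : Prop :=
  [/\
   [/\ (forall (k : K) (a b : A), teq (Delta (k *: a + b)) (tscale k (Delta a) ++ Delta b)),
   teq (Delta 1) [:: (1, 1)],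
   (forall a b : A, teq (Delta (a * b))
        [seq (x.1 * y.1, x.2 * y.2) | x <- Delta a, y <- Delta b]) &
   (forall (a : A) (f g h : A -> K), lin_fun f -> lin_fun g -> lin_fun h ->
      \sum_(x <- Delta a) \sum_(y <- Delta x.1) f y.1 * g y.2 * h x.2 =
      \sum_(x <- Delta a) \sum_(y <- Delta x.2) f x.1 * g y.1 * h y.2)],
   [/\ lin_fun eps, eps 1 = 1, (forall a b, eps (a * b) = eps a * eps b),
       (forall a, \sum_(x <- Delta a) eps x.1 *: x.2 = a) &
       (forall a, \sum_(x <- Delta a) eps x.2 *: x.1 = a)],
   [/\ (forall (k : K) (a b : A), S (k *: a + b) = k *: S a + S b),
       (forall a, \sum_(x <- Delta a) S x.1 * x.2 = eps a *: 1) &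
       (forall a, \sum_(x <- Delta a) x.1 * S x.2 = eps a *: 1)],
   [/\ (forall (k : K) (a b : A), star (k *: a + b) = (k^*)%C *: star a + star b),
       (forall a b, star (a * b) = star b * star a),
       (forall a, star (star a) = a) &
       (forall a, teq (Delta (star a)) [seq (star x.1, star x.2) | x <- Delta a])] &
   [/\ lin_fun Phi, Phi 1 = 1, (forall a, 0 <= Phi (star a * a)),
       (forall a, \sum_(x <- Delta a) Phi x.1 *: x.2 = Phi a *: 1) &
       (forall a, \sum_(x <- Delta a) Phi x.2 *: x.1 = Phi a *: 1)]].

Definition is_right_coideal_star_subalg (Delta : A -> seq (A * A))
    (star : A -> A) (B : A -> Prop) : Prop :=
  [/\ B 1,
      (forall (k : K) (a b : A), B a -> B b -> B (k *: a + b)),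
      (forall a b, B a -> B b -> B (a * b)),
      (forall a, B a -> B (star a)) &
      (forall b, B b -> exists s : seq (A * A),
          teq (Delta b) s /\ (forall x, x \in s -> B x.1))].

Definition in_ABplus (eps : A -> K) (B : A -> Prop) (a : A) : Prop :=
  exists s : seq (A * A),
    (forall x, x \in s -> B x.2 /\ eps x.2 = 0) /\ a = \sum_(x <- s) x.1 * x.2.

Definition lin_funC (eps : A -> K) (B : A -> Prop) (g : A -> K) : Prop :=
  lin_fun g /\ forall a, in_ABplus eps B a -> g a = 0.

(* equality of tensors in V (x) C; second components are representatives in A
   of elements pi_C(a) of C *)
Definition teqC (eps : A -> K) (B : A -> Prop) (V : lmodType K)
    (s t : seq (V * A)) : Prop :=
  forall (f : V -> K) (g : A -> K), lin_fun f -> lin_funC eps B g ->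
    \sum_(x <- s) f x.1 * g x.2 = \sum_(x <- t) f x.1 * g x.2.

(* The comultiplication of C is  pi_C(a) |-> pi_C(a_(1)) (x) pi_C(a_(2)),
   its counit is  pi_C(a) |-> eps a, the A-action on C is a . pi_C(a') =
   pi_C(a a'), and  pi_C(a)^dagger = pi_C(star (S a)). *)
Definition is_BRepC (Delta : A -> seq (A * A)) (eps : A -> K)
    (S : A -> A) (star : A -> A) (B : A -> Prop)
    (V : lmodType K) (act : A -> V -> V) (delta : V -> seq (V * A))
    (ip : V -> V -> K) : Prop :=
  [/\
   [/\ (forall b (k : K) (v w : V), B b -> act b (k *: v + w) = k *: act b v + act b w),
       (forall b b' (k : K) (v : V), B b -> B b' ->
          act (k *: b + b') v = k *: act b v + act b' v),
       (forall v, act 1 v = v) &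
       (forall b b' v, B b -> B b' -> act (b * b') v = act b (act b' v))],
   [/\ (forall (k : K) (v w : V),
          teqC eps B (delta (k *: v + w)) (tscale k (delta v) ++ delta w)),
       (forall (v : V) (f : V -> K) (g h : A -> K),
          lin_fun f -> lin_funC eps B g -> lin_funC eps B h ->
          \sum_(x <- delta v) \sum_(y <- delta x.1) f y.1 * g y.2 * h x.2 =
          \sum_(x <- delta v) \sum_(y <- Delta x.2) f x.1 * g y.1 * h y.2) &
       (forall v, \sum_(x <- delta v) eps x.2 *: x.1 = v)],
   (* compatibility  (bv)_(0) (x) (bv)_(1) = b_(1) v_(0) (x) b_(2) . v_(1),
      using any representative of Delta b in B (x) A *)
   (forall b v (s : seq (A * A)), B b -> teq (Delta b) s -> (forall x, x \in s -> B x.1) ->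
      teqC eps B (delta (act b v))
        [seq (act y.1 x.1, y.2 * x.2) | y <- s, x <- delta v]),
   [/\ (forall (k : K) (u v w : V), ip u (k *: v + w) = k * ip u v + ip u w),
       (forall u v, ip v u = (ip u v)^*%C) &
       (forall v, v != 0 -> 0 < ip v v)] &
   [/\ (forall b v w, B b -> ip v (act b w) = ip (act (star b) v) w) &
   (* <v, w_(0)> w_(1) = <v_(0), w> v_(1)^dagger  in C *)
   (forall v w, in_ABplus eps B
      (\sum_(x <- delta w) ip v x.1 *: x.2 -
       \sum_(x <- delta v) ip x.1 w *: star (S x.2)))]].

End Defs.

(* Main.v *)
Require Import Defs.
From mathcomp Require Import all_boot all_order all_algebra.
From mathcomp Require Import reals complex.
From mathcomp Require Import boolp classical_sets.
From mathcomp Require Import ring lra.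
Import Order.TTheory GRing.Theory Num.Theory.
Set Implicit Arguments. Unset Strict Implicit. Unset Printing Implicit Defensive.
Local Open Scope ring_scope.

Local Open Scope classical_set_scope.
Section Sep.
Variable R : realType.
Local Notation K := (R[i]).
Variable V : lmodType K.

Lemma sep (v : V) : v != 0 -> exists f : V -> K, lin_fun f /\ f v = 1.
Proof.
move=> v0.
pose P : set (set V) := fun X => ~ X v /\ (forall k x y, X x -> X y -> X (k *: x + y)).
have [A0 [[nAv clA] maxA]] : exists A, P A /\ forall B, A `<` B -> ~ P B.
  apply: Zorn_bigcup => F FP Ftot; split.
  - by case=> X FX Xv; have [] := FP X FX.
  - move=> k x y [X FX Xx] [Y FY Yy].
    case: (Ftot X Y FX FY) => [XY|YX].
    + by exists Y => //; apply: (FP Y FY).2 => //; apply: XY.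
    + by exists X => //; apply: (FP X FX).2 => //; apply: YX.
have A00 : A0 0.
  apply: contrapT => nA0.
  have emp : forall x, ~ A0 x.
    by move=> x Ax; apply: nA0; rewrite -(addNr x) -scaleN1r; apply: clA.
  have P0 : P [set 0].
    split; first by move=> /= /eqP; rewrite (negbTE v0).
    by move=> k x y /= -> ->; rewrite scaler0 addr0.
  apply: (maxA [set 0]) P0; split.
  - by move=> x /emp.
  - by move=> /(_ 0 erefl).
have clZ : forall k x, A0 x -> A0 (k *: x).
  by move=> k x Ax; rewrite -[_ *: _]addr0; apply: clA.
have uniq : forall x t t', A0 (x - t *: v) -> A0 (x - t' *: v) -> t = t'.
  move=> x t t' H1 H2; apply: contrapT => /eqP tt.
  have : A0 ((t - t') *: v).
    have -> : (t - t') *: v = (-1) *: (x - t *: v) + (x - t' *: v).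
      by rewrite scaleN1r opprB scalerBl addrA subrK.
    exact: clA.
  move=> /(clZ (t - t')^-1); rewrite scalerA mulVf ?subr_eq0 // scale1r.
  exact: nAv.
have dec : forall x, exists t, A0 (x - t *: v).
  move=> x; apply: contrapT => /forallNP H.
  pose B := fun y => exists a s, A0 a /\ y = a + s *: x.
  apply: (maxA B); split.
  - by move=> a Aa; exists a, 0; rewrite scale0r addr0.
  - move=> BA; apply: (H 0); rewrite scale0r subr0; apply: BA.
    by exists 0, 1; rewrite add0r scale1r.
  - case=> a [s [Aa vE]].
    have [s0|s0] := eqVneq s 0.
      by apply: nAv; move: vE; rewrite s0 scale0r addr0 => ->.
    apply: (H s^-1).
    have -> : x - s^-1 *: v = (- s^-1) *: a.
      rewrite vE scalerDr scalerA mulVf // scale1r scaleNr.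
      by rewrite opprD addrCA subrr addr0.
    exact: clZ.
  - move=> k y z [a [s [Aa ->]]] [a' [s' [Aa' ->]]].
    exists (k *: a + a'), (k * s + s'); split; first exact: clA.
    by rewrite scalerDr scalerA scalerDl addrACA.
pose f x := projT1 (cid (dec x)).
have fP : forall x, A0 (x - f x *: v) by move=> x; rewrite /f; case: cid.
exists f; split.
  move=> k x y; apply: (uniq (k *: x + y)); first exact: fP.
  have -> : k *: x + y - (k * f x + f y) *: v = k *: (x - f x *: v) + (y - f y *: v).
    by rewrite scalerDl -scalerA scalerBr opprD addrACA.
  by apply: clA; apply: fP.
apply: (uniq v); first exact: fP.
by rewrite scale1r subrr.
Qed.

End Sep.
Local Close Scope classical_set_scope.
Section Lin.
Variable R : realType.
Local Notation K := (R[i]).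

Definition linZ (V Z : lmodType K) (G : V -> Z) :=
  forall k x y, G (k *: x + y) = k *: G x + G y.

Section LinV.
Variables V Z : lmodType K.

Lemma linZ0 (G : V -> Z) : linZ G -> G 0 = 0.
Proof.
move=> lG; have := lG 1 0 0; rewrite !scale1r addr0 => h.
by apply: (addrI (G 0)); rewrite addr0 -h.
Qed.

Lemma linZD (G : V -> Z) : linZ G -> forall x y, G (x + y) = G x + G y.
Proof. by move=> lG x y; rewrite -[x in LHS]scale1r lG scale1r. Qed.

Lemma linZZ (G : V -> Z) : linZ G -> forall k x, G (k *: x) = k *: G x.
Proof. by move=> lG k x; rewrite -[_ *: x]addr0 lG linZ0 // addr0. Qed.

Lemma linZ_sum (G : V -> Z) (I : Type) (r : seq I) (F : I -> V) :
  linZ G -> G (\sum_(i <- r) F i) = \sum_(i <- r) G (F i).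
Proof.
move=> lG; elim: r => [|a r IH]; first by rewrite !big_nil linZ0.
by rewrite !big_cons linZD // IH.
Qed.

Lemma linZN (G : V -> Z) : linZ G -> forall x, G (- x) = - G x.
Proof. by move=> lG x; rewrite -scaleN1r linZZ // scaleN1r. Qed.

Lemma linZB (G : V -> Z) : linZ G -> forall x y, G (x - y) = G x - G y.
Proof. by move=> lG x y; rewrite linZD // linZN. Qed.

Lemma lf0 (f : V -> K) : lin_fun f -> f 0 = 0.
Proof.
move=> lf; have := lf 1 0 0; rewrite scale1r addr0 mul1r => h.
by apply: (addrI (f 0)); rewrite addr0 -h.
Qed.

Lemma lfD (f : V -> K) : lin_fun f -> forall x y, f (x + y) = f x + f y.
Proof. by move=> lf x y; rewrite -[x in LHS]scale1r lf mul1r. Qed.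

Lemma lfZ (f : V -> K) : lin_fun f -> forall k x, f (k *: x) = k * f x.
Proof. by move=> lf k x; rewrite -[_ *: x]addr0 lf lf0 // addr0. Qed.

Lemma lf_sum (f : V -> K) (I : Type) (r : seq I) (F : I -> V) :
  lin_fun f -> f (\sum_(i <- r) F i) = \sum_(i <- r) f (F i).
Proof.
move=> lf; elim: r => [|a r IH]; first by rewrite !big_nil lf0.
by rewrite !big_cons lfD // IH.
Qed.

Lemma lfN (f : V -> K) : lin_fun f -> forall x, f (- x) = - f x.
Proof. by move=> lf x; rewrite -scaleN1r lfZ // mulN1r. Qed.

Lemma lfB (f : V -> K) : lin_fun f -> forall x y, f (x - y) = f x - f y.
Proof. by move=> lf x y; rewrite lfD // lfN. Qed.

End LinV.
Section Decomp.
Variable V : lmodType K.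
Definition LF := {f : V -> K | lin_fun f}.

Lemma decomp (s : seq V) : exists sys : seq (LF * V),
  forall u, u \in s -> u = \sum_(p <- sys) sval p.1 u *: p.2.
Proof.
elim: s => [|u s [sys IH]]; first by exists [::].
pose P x := x - \sum_(p <- sys) sval p.1 x *: p.2.
have lP : linZ P.
  move=> k x y; rewrite /P.
  under eq_bigr => p _ do rewrite (proj2_sig p.1) scalerDl -scalerA.
  by rewrite big_split /= -scaler_sumr scalerBr opprD addrACA.
have [f [lf fr]] : exists f : V -> K, lin_fun f /\ f (P u) *: P u = P u.
  case: (eqVneq (P u) 0) => [->|nz].
    by exists (fun _ => 0); split; [move=> *; rewrite mulr0 addr0 | rewrite scaler0].
  by have [f [lf f1]] := sep nz; exists f; rewrite f1 scale1r.
have lg : lin_fun (fun x => f (P x)) by move=> k x y /=; rewrite lP; exact: lf.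
exists ((exist _ _ lg, P u) :: sys) => w; rewrite inE => /orP [/eqP ->|ws].
  by rewrite big_cons /= fr /P subrK.
rewrite big_cons /=.
have -> : P w = 0 by rewrite /P -IH // subrr.
by rewrite lf0 // scale0r add0r; exact: IH.
Qed.

Lemma decompZ (Z : lmodType K) (s : seq V) (sys : seq (LF * V)) (G : V -> Z) u :
  (forall u, u \in s -> u = \sum_(p <- sys) sval p.1 u *: p.2) -> linZ G ->
  u \in s -> G u = \sum_(p <- sys) sval p.1 u *: G p.2.
Proof.
move=> H lG us; rewrite {1}(H u us) linZ_sum //.
by apply: eq_bigr => p _; rewrite linZZ.
Qed.

End Decomp.

Section Bil.
Variables V W Z : lmodType K.

Lemma teq_bil (s t : seq (V * W)) (B : V -> W -> Z) : teq s t ->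
  (forall w, linZ (B^~ w)) -> (forall v, linZ (B v)) ->
  \sum_(x <- s) B x.1 x.2 = \sum_(x <- t) B x.1 x.2.
Proof.
move=> st lB1 lB2.
have [sys1 H1] := decomp [seq x.1 | x <- s ++ t].
have [sys2 H2] := decomp [seq x.2 | x <- s ++ t].
have E : forall x, x \in s ++ t -> B x.1 x.2 = \sum_(p <- sys1) \sum_(q <- sys2)
    (sval p.1 x.1 * sval q.1 x.2) *: B p.2 q.2.
  move=> x xst; rewrite (decompZ H1 (lB1 x.2)); last by apply: map_f.
  apply: eq_bigr => p _; rewrite (decompZ H2 (lB2 p.2)); last by apply: map_f.
  by rewrite scaler_sumr; apply: eq_bigr => q _; rewrite scalerA.
have F : forall L, (forall x, x \in L -> x \in s ++ t) ->
    \sum_(x <- L) B x.1 x.2 = \sum_(p <- sys1) \sum_(q <- sys2)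
    (\sum_(x <- L) sval p.1 x.1 * sval q.1 x.2) *: B p.2 q.2.
  move=> L HL; rewrite (eq_big_seq _ (fun x xL => E x (HL x xL))).
  rewrite exchange_big; apply: eq_bigr => p _; rewrite exchange_big.
  by apply: eq_bigr => q _; rewrite scaler_suml.
rewrite F; last by move=> x xs; rewrite mem_cat xs.
rewrite [RHS]F; last by move=> x xs; rewrite mem_cat xs orbT.
apply: eq_bigr => p _; apply: eq_bigr => q _.
by rewrite (st _ _ (proj2_sig p.1) (proj2_sig q.1)).
Qed.
End Bil.

Section Tri.
Variables V Z : lmodType K.

Definition teq3 (L1 L2 : seq (V * V * V)) := forall f g h : V -> K,
  lin_fun f -> lin_fun g -> lin_fun h ->
  \sum_(z <- L1) f z.1.1 * g z.1.2 * h z.2 = \sum_(z <- L2) f z.1.1 * g z.1.2 * h z.2.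

Lemma teq3_tri (L1 L2 : seq (V * V * V)) (F : V -> V -> V -> Z) : teq3 L1 L2 ->
  (forall b c, linZ (fun a => F a b c)) -> (forall a c, linZ (fun b => F a b c)) ->
  (forall a b, linZ (F a b)) ->
  \sum_(z <- L1) F z.1.1 z.1.2 z.2 = \sum_(z <- L2) F z.1.1 z.1.2 z.2.
Proof.
move=> st lF1 lF2 lF3.
pose L := L1 ++ L2.
have [sys H] := decomp ([seq z.1.1 | z <- L] ++ [seq z.1.2 | z <- L] ++ [seq z.2 | z <- L]).
have E : forall z, z \in L -> F z.1.1 z.1.2 z.2 = \sum_(p <- sys) \sum_(q <- sys)
    \sum_(r <- sys) (sval p.1 z.1.1 * sval q.1 z.1.2 * sval r.1 z.2) *: F p.2 q.2 r.2.
  move=> z zL; rewrite (decompZ H (lF1 z.1.2 z.2)); last by rewrite !mem_cat (map_f (fun z => z.1.1) zL).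
  apply: eq_bigr => p _; rewrite (decompZ H (lF2 p.2 z.2)); last by rewrite !mem_cat (map_f (fun z => z.1.2) zL) orbT.
  rewrite scaler_sumr; apply: eq_bigr => q _.
  rewrite (decompZ H (lF3 p.2 q.2)); last by rewrite !mem_cat (map_f (fun z => z.2) zL) !orbT.
  by rewrite !scaler_sumr; apply: eq_bigr => r _; rewrite !scalerA.
have G : forall L', (forall z, z \in L' -> z \in L) ->
    \sum_(z <- L') F z.1.1 z.1.2 z.2 = \sum_(p <- sys) \sum_(q <- sys) \sum_(r <- sys)
    (\sum_(z <- L') sval p.1 z.1.1 * sval q.1 z.1.2 * sval r.1 z.2) *: F p.2 q.2 r.2.
  move=> L' HL; rewrite (eq_big_seq _ (fun z zL => E z (HL z zL))).
  rewrite exchange_big; apply: eq_bigr => p _; rewrite exchange_big.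
  apply: eq_bigr => q _; rewrite exchange_big.
  by apply: eq_bigr => r _; rewrite scaler_suml.
rewrite G; last by move=> x xs; rewrite mem_cat xs.
rewrite [RHS]G; last by move=> x xs; rewrite mem_cat xs orbT.
apply: eq_bigr => p _; apply: eq_bigr => q _; apply: eq_bigr => r _.
by rewrite (st _ _ _ (proj2_sig p.1) (proj2_sig q.1) (proj2_sig r.1)).
Qed.
End Tri.

End Lin.

Section Hopf.
Variable R : realType.
Local Notation K := (R[i]).

Section Comb.
Variables V Z : lmodType K.
Lemma linZ_sumf (I : Type) (r : seq I) (G : I -> V -> Z) :
  (forall i, linZ (G i)) -> linZ (fun a => \sum_(i <- r) G i a).
Proof.
move=> lG k x y; rewrite scaler_sumr -big_split /=.
by apply: eq_bigr => i _; rewrite lG.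
Qed.
Lemma linZ_scal (G : V -> Z) k0 : linZ G -> linZ (fun a => k0 *: G a).
Proof. by move=> lG k x y; rewrite lG scalerDr !scalerA mulrC. Qed.
Lemma linZ_lfZ (G : V -> V) (f : V -> K) (z : Z) :
  lin_fun f -> linZ G -> linZ (fun a => f (G a) *: z).
Proof. by move=> lf lG k x y; rewrite lG lf scalerDl scalerA. Qed.
Lemma linZ_lfZ' (f : V -> K) (G : V -> Z) :
  lin_fun f -> linZ (fun a => f a *: G a) -> True.
Proof. by []. Qed.
Lemma linZ_idf : linZ (fun a : V => a). Proof. by []. Qed.
End Comb.
Section CombA.
Variable B : algType K.
Lemma linZ_mullG (V : lmodType K) (G : V -> B) c : linZ G -> linZ (fun a => G a * c).
Proof. by move=> lG k x y; rewrite lG mulrDl scalerAl. Qed.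
Lemma linZ_mulrG (V : lmodType K) (G : V -> B) c : linZ G -> linZ (fun a => c * G a).
Proof. by move=> lG k x y; rewrite lG mulrDr scalerAr. Qed.
Lemma linZ_mull c : linZ (fun a : B => a * c).
Proof. exact: (linZ_mullG c (@linZ_idf B)). Qed.
Lemma linZ_mulr c : linZ (fun a : B => c * a).
Proof. exact: (linZ_mulrG c (@linZ_idf B)). Qed.
End CombA.

Variables (A : algType K) (Delta : A -> seq (A * A)) (eps : A -> K) (S star : A -> A)
  (Phi : A -> K).
Hypothesis HH : is_CQG_Hopf_star Delta eps S star Phi.
Ltac hh := move: HH => [[? ? ? ?] [? ? ? ? ?] [? ? ?] [? ? ? ?] [? ? ? ? ?]]; done.

Lemma DeltaL k a b : teq (Delta (k *: a + b)) (tscale k (Delta a) ++ Delta b).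
Proof. by hh. Qed.
Lemma DeltaM a b : teq (Delta (a * b))
        [seq (x.1 * y.1, x.2 * y.2) | x <- Delta a, y <- Delta b].
Proof. by hh. Qed.
Lemma coass a (f g h : A -> K) : lin_fun f -> lin_fun g -> lin_fun h ->
      \sum_(x <- Delta a) \sum_(y <- Delta x.1) f y.1 * g y.2 * h x.2 =
      \sum_(x <- Delta a) \sum_(y <- Delta x.2) f x.1 * g y.1 * h y.2.
Proof. by move: HH => [[_ _ _ H] _ _ _ _]; apply: H. Qed.
Lemma eps_lin : lin_fun eps. Proof. by hh. Qed.
Lemma counitL a : \sum_(x <- Delta a) eps x.1 *: x.2 = a. Proof. by hh. Qed.
Lemma counitR a : \sum_(x <- Delta a) eps x.2 *: x.1 = a. Proof. by hh. Qed.
Lemma S_lin k a b : S (k *: a + b) = k *: S a + S b. Proof. by hh. Qed.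
Lemma antiL a : \sum_(x <- Delta a) S x.1 * x.2 = eps a *: 1. Proof. by hh. Qed.
Lemma antiR a : \sum_(x <- Delta a) x.1 * S x.2 = eps a *: 1. Proof. by hh. Qed.
Lemma star_lin k a b : star (k *: a + b) = (k^*)%C *: star a + star b.
Proof. by hh. Qed.
Lemma starM a b : star (a * b) = star b * star a. Proof. by hh. Qed.
Lemma starK a : star (star a) = a. Proof. by hh. Qed.
Lemma starD a : teq (Delta (star a)) [seq (star x.1, star x.2) | x <- Delta a].
Proof. by hh. Qed.
Lemma Phi_lin : lin_fun Phi. Proof. by hh. Qed.
Lemma Phi1 : Phi 1 = 1. Proof. by hh. Qed.
Lemma Phi_pos a : 0 <= Phi (star a * a). Proof. by hh. Qed.
Lemma invL a : \sum_(x <- Delta a) Phi x.1 *: x.2 = Phi a *: 1.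
Proof. by hh. Qed.
Lemma invR a : \sum_(x <- Delta a) Phi x.2 *: x.1 = Phi a *: 1.
Proof. by hh. Qed.

Definition bil (Z : lmodType K) (F : A -> A -> Z) :=
  (forall w, linZ (F^~ w)) /\ (forall v, linZ (F v)).

Lemma DeltaM_bil (Z : lmodType K) (F : A -> A -> Z) a b : bil F ->
  \sum_(z <- Delta (a * b)) F z.1 z.2 =
  \sum_(x <- Delta a) \sum_(y <- Delta b) F (x.1 * y.1) (x.2 * y.2).
Proof.
move=> [l1 l2]; rewrite (teq_bil (DeltaM a b) l1 l2).
by rewrite big_allpairs_dep.
Qed.

Lemma coass_tri (Z : lmodType K) (F : A -> A -> A -> Z) a :
  (forall b c, linZ (fun a => F a b c)) -> (forall a c, linZ (fun b => F a b c)) ->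
  (forall a b, linZ (F a b)) ->
  \sum_(x <- Delta a) \sum_(y <- Delta x.1) F y.1 y.2 x.2 =
  \sum_(x <- Delta a) \sum_(y <- Delta x.2) F x.1 y.1 y.2.
Proof.
move=> l1 l2 l3.
have := @teq3_tri R A Z [seq (y.1, y.2, x.2) | x <- Delta a, y <- Delta x.1]
  [seq (x.1, y.1, y.2) | x <- Delta a, y <- Delta x.2] F.
rewrite !big_allpairs_dep /=; apply => // f g h lf lg lh.
by rewrite !big_allpairs_dep /=; apply: coass.
Qed.


Lemma star0 : star 0 = 0.
Proof.
have h := star_lin 1 0 0; rewrite scale1r addr0 conjc1 scale1r in h.
by apply: (addrI (star 0)); rewrite addr0 -h.
Qed.
Lemma starDr x y : star (x + y) = star x + star y.
Proof. by rewrite -[x in LHS]scale1r star_lin conjc1 scale1r. Qed.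
Lemma starZ k x : star (k *: x) = (k^*)%C *: star x.
Proof. by rewrite -[_ *: x]addr0 star_lin star0 addr0. Qed.
Lemma starN x : star (- x) = - star x.
Proof. by rewrite -scaleN1r starZ rmorphN1 scaleN1r. Qed.
Lemma star_sum (I : Type) (r : seq I) (F : I -> A) :
  star (\sum_(i <- r) F i) = \sum_(i <- r) star (F i).
Proof. by elim: r => [|a r IH]; rewrite ?big_nil ?star0 // !big_cons starDr IH. Qed.
Lemma star1 : star 1 = 1.
Proof. by have h := starM (star 1) 1; rewrite mulr1 starK mulr1 in h. Qed.

Lemma PhiD x y : Phi (x + y) = Phi x + Phi y. Proof. have := @lfD R A Phi Phi_lin x y. exact. Qed.
Lemma PhiZ k x : Phi (k *: x) = k * Phi x. Proof. have := @lfZ R A Phi Phi_lin k x. exact. Qed.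

Lemma sesq x y k : Phi (star (x + k *: y) * (x + k *: y)) =
  Phi (star x * x) + k * Phi (star x * y) + (k^*)%C * Phi (star y * x)
  + ((k^*)%C * k) * Phi (star y * y).
Proof.
rewrite starDr starZ mulrDl !mulrDr -!scalerAl -!scalerAr !scalerA !PhiD !PhiZ.
by rewrite !addrA.
Qed.

Lemma Phi_real a : complex.Im (Phi (star a * a)) = 0.
Proof. exact: ger0_Im (Phi_pos a). Qed.

Lemma herm u v : Phi (star v * u) = (Phi (star u * v))^*%C.
Proof.
have h1 := sesq u v 1; have h2 := sesq u v 'i%C.
have i1 := Phi_real (u + 1 *: v); have i2 := Phi_real (u + 'i%C *: v).
have i3 := Phi_real u; have i4 := Phi_real v.
move: h1 h2 i1 i2 i3 i4.
move: (Phi (star (u + 1 *: v) * (u + 1 *: v))) (Phi (star (u + 'i%C *: v) * (u + 'i%C *: v))).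
move: (Phi (star u * u)) (Phi (star v * v)) (Phi (star u * v)) (Phi (star v * u)).
move=> [a1 a2] [b1 b2] [c1 c2] [d1 d2] [e1 e2] [f1 f2] -> -> /= h1 h2 a0 b0.
by apply/eqP; rewrite eq_complex /=; apply/andP; split; apply/eqP; lra.
Qed.

Lemma CS v : Phi (star v * v) = 0 -> forall y, Phi (star y * v) = 0.
Proof.
move=> q0 y.
have hv := herm y v.
have cpos := Phi_pos y.
pose r : R := (complex.Re (Phi (star y * y)) + 1)^-1.
pose t : K := ((- r)%:C * Phi (star y * v))%C.
have pos := Phi_pos (v + t *: y).
rewrite sesq q0 hv in pos.
move: pos cpos; rewrite /t.
have : r * (complex.Re (Phi (star y * y)) + 1) = 1.
  rewrite mulVf //; apply: lt0r_neq0.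
  have : 0 <= Phi (star y * y) by exact: Phi_pos.
  by rewrite lecE /= => /andP [_ h]; apply: ltr_wpDl.
have : 0 < r.
  rewrite invr_gt0.
  have : 0 <= Phi (star y * y) by exact: Phi_pos.
  by rewrite lecE /= => /andP [_ h]; apply: ltr_wpDl.
clear t; clearbody r.
move: (Phi (star y * y)) (Phi (star y * v)) => [c1 c2] [a1 a2] /= r0 rc.
rewrite !lecE /= => /andP [_ h] /andP [/eqP c20 c10].
subst c2.
have e : r * c1 = 1 - r by rewrite -rc; ring.
have hn : 0 <= - (r * (1 + r)) * (a1 ^+ 2 + a2 ^+ 2).
  have -> : - (r * (1 + r)) * (a1 ^+ 2 + a2 ^+ 2) =
    r * (a1 ^+ 2 + a2 ^+ 2) * (r * c1 - 2) by rewrite e; ring.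
  by move: h; congr (_ <= _); ring.
have p : 0 < r * (1 + r) by apply: mulr_gt0 => //; apply: addr_gt0.
have n0 : a1 ^+ 2 + a2 ^+ 2 <= 0.
  by move: hn; rewrite mulNr oppr_ge0 pmulr_rle0.
by apply/eqP; rewrite eq_complex /=; apply/andP; split; apply/eqP; nra.
Qed.

Lemma linZ_S : linZ S. Proof. exact: S_lin. Qed.
Lemma PhiSum (I : Type) (r : seq I) (F : I -> A) :
  Phi (\sum_(i <- r) F i) = \sum_(i <- r) Phi (F i).
Proof. exact: (@lf_sum R A Phi I r F Phi_lin). Qed.

Lemma ClaimA x : (forall c, Phi (c * x) = 0) ->
  forall c, \sum_(y <- Delta x) Phi (c * y.2) *: y.1 = 0.
Proof.
move=> Nx c.
have e1 : forall z, Phi (c * z) = \sum_(p <- Delta c) eps p.1 * Phi (p.2 * z).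
  move=> z; rewrite -{1}(counitL c) mulr_suml PhiSum.
  by apply: eq_bigr => p _; rewrite -scalerAl PhiZ.
pose F := fun a b g => \sum_(y <- Delta x) Phi (g * y.2) *: (S a * b * y.1).
have e2 : \sum_(y <- Delta x) Phi (c * y.2) *: y.1 =
   \sum_(p <- Delta c) \sum_(q <- Delta p.1) F q.1 q.2 p.2.
  rewrite /F.
  under eq_bigr => y _ do rewrite e1 scaler_suml.
  rewrite exchange_big /=; apply: eq_bigr => p _.
  have ep : forall w, eps p.1 *: w = (\sum_(q <- Delta p.1) S q.1 * q.2) * w.
    by move=> w; rewrite antiL -scalerAl mul1r.
  under eq_bigr => y _ do rewrite mulrC -scalerA ep mulr_suml scaler_sumr.
  by rewrite exchange_big.
rewrite e2 (coass_tri (F := F)) /F /=.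
- apply: big1 => p _.
  have e3 : \sum_(q <- Delta p.2) \sum_(y <- Delta x) Phi (q.2 * y.2) *: (S p.1 * q.1 * y.1)
     = S p.1 * \sum_(z <- Delta (p.2 * x)) Phi z.2 *: z.1.
    rewrite (DeltaM_bil (F := fun a b => Phi b *: a)).
      rewrite mulr_sumr; apply: eq_bigr => q _; rewrite mulr_sumr; apply: eq_bigr => y _.
      by rewrite -scalerAr mulrA.
    split=> [w|v]; first exact: linZ_scal (@linZ_idf _).
    by apply: (linZ_lfZ _ Phi_lin (@linZ_idf _)).
  by rewrite e3 invR Nx scale0r mulr0.
- move=> b g; apply: linZ_sumf => y; apply: linZ_scal.
  by apply: linZ_mullG; apply: linZ_mullG; exact: linZ_S.
- move=> a g; apply: linZ_sumf => y; apply: linZ_scal.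
  by apply: linZ_mullG; apply: linZ_mulrG; exact: linZ_idf.
- move=> a b; apply: linZ_sumf => y.
  by apply: linZ_lfZ; [exact: Phi_lin | exact: linZ_mull].
Qed.

Lemma DeltaL_bil (Z : lmodType K) (F : A -> A -> Z) k a b : bil F ->
  \sum_(z <- Delta (k *: a + b)) F z.1 z.2 =
  k *: \sum_(z <- Delta a) F z.1 z.2 + \sum_(z <- Delta b) F z.1 z.2.
Proof.
move=> [l1 l2]; rewrite (teq_bil (DeltaL k a b) l1 l2) big_cat big_map /= scaler_sumr.
congr (_ + _); apply: eq_bigr => z _.
have := linZZ (l1 z.2) k z.1; exact.
Qed.

Lemma ClaimB x : (forall c, Phi (c * x) = 0) -> x = 0.
Proof.
move=> Nx; rewrite -(counitR x).
have e : forall y : A * A, eps y.2 *: y.1 =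
    \sum_(z <- Delta y.2) Phi (S z.1 * z.2) *: y.1.
  by move=> y; rewrite -scaler_suml -PhiSum antiL PhiZ Phi1 mulr1.
under eq_bigr do rewrite e.
pose F := fun a b g : A => Phi (S b * g) *: a.
have -> : \sum_(y <- Delta x) \sum_(z <- Delta y.2) Phi (S z.1 * z.2) *: y.1 =
    \sum_(y <- Delta x) \sum_(z <- Delta y.2) F y.1 z.1 z.2 by [].
rewrite -(coass_tri (F := F)) /F; first last.
- by move=> a b; apply: linZ_lfZ; [exact: Phi_lin | exact: linZ_mulr].
- by move=> a g; apply: linZ_lfZ; [exact: Phi_lin | apply: linZ_mullG; exact: linZ_S].
- by move=> b g; apply: linZ_scal; exact: linZ_idf.
have [sys H] := decomp [seq y.1 | y <- Delta x].
pose G u g := \sum_(z <- Delta u) Phi (S z.2 * g) *: z.1.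
have lG : forall g, linZ (G^~ g).
  move=> g k u u'; rewrite /G (DeltaL_bil (F := fun a b => Phi (S b * g) *: a)) //; split=> [w|v].
    by apply: linZ_scal; exact: linZ_idf.
  by apply: linZ_lfZ; [exact: Phi_lin | apply: linZ_mullG; exact: linZ_S].
have -> : \sum_(y <- Delta x) \sum_(z <- Delta y.1) Phi (S z.2 * y.2) *: z.1 =
    \sum_(y <- Delta x) G y.1 y.2 by [].
rewrite (eq_big_seq (fun y => \sum_(p <- sys) sval p.1 y.1 *: G p.2 y.2)); last first.
  by move=> y yD; exact: (decompZ H (lG y.2) (map_f _ yD)).
rewrite exchange_big; apply: big1 => p _.
rewrite /G; under eq_bigr => y _ do rewrite scaler_sumr.
rewrite exchange_big; apply: big1 => z _.
under eq_bigr => y _ do rewrite scalerA.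
rewrite -scaler_suml.
have -> : \sum_(y <- Delta x) sval p.1 y.1 * Phi (S z.2 * y.2) = 0.
  transitivity (sval p.1 (\sum_(y <- Delta x) Phi (S z.2 * y.2) *: y.1)).
    rewrite (lf_sum _ _ (proj2_sig p.1)).
    by apply: eq_bigr => y _; rewrite (lfZ (proj2_sig p.1)) mulrC.
  by rewrite (ClaimA Nx) (lf0 (proj2_sig p.1)).
by rewrite scale0r.
Qed.

Lemma faithful v : v != 0 -> 0 < Phi (star v * v).
Proof.
move=> v0; rewrite lt_def Phi_pos andbT; apply/eqP => q0.
move/eqP: v0; apply; apply: ClaimB => c.
by rewrite -[c]starK; apply: CS.
Qed.

Lemma Lid a b : \sum_(x <- Delta a) Phi (x.1 * b) *: x.2 =
  \sum_(y <- Delta b) Phi (a * y.1) *: S y.2.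
Proof.
have e1 : forall y : A * A, Phi (a * y.1) *: S y.2 =
    \sum_(p <- Delta a) \sum_(q <- Delta y.1) Phi (p.1 * q.1) *: (p.2 * q.2 * S y.2).
  move=> y; rewrite -{1}[S y.2]mul1r scalerAl -invL mulr_suml.
  rewrite (eq_bigr (fun w => Phi w.1 *: (w.2 * S y.2))); last by move=> w _; rewrite scalerAl.
  rewrite (DeltaM_bil (F := fun u v => Phi u *: (v * S y.2))) //; split=> [w|v].
    by apply: linZ_lfZ; [exact: Phi_lin | exact: linZ_idf].
  by apply: linZ_scal; apply: linZ_mull.
rewrite (eq_bigr _ (fun y _ => e1 y)) exchange_big /=; apply: eq_bigr => p _.
pose F := fun u v g : A => Phi (p.1 * u) *: (p.2 * v * S g).
have -> : \sum_(y <- Delta b) \sum_(q <- Delta y.1) Phi (p.1 * q.1) *: (p.2 * q.2 * S y.2)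
  = \sum_(y <- Delta b) \sum_(q <- Delta y.1) F q.1 q.2 y.2 by [].
rewrite (coass_tri (F := F)) /F; first last.
- by move=> u v; apply: linZ_scal; apply: linZ_mulrG; exact: linZ_S.
- by move=> u g; apply: linZ_scal; apply: linZ_mullG; apply: linZ_mulr.
- by move=> v g; apply: linZ_lfZ; [exact: Phi_lin | exact: linZ_mulr].
have e2 : forall y : A * A, \sum_(q <- Delta y.2) Phi (p.1 * y.1) *: (p.2 * q.1 * S q.2)
    = (Phi (p.1 * (eps y.2 *: y.1))) *: p.2.
  move=> y; rewrite -scaler_sumr.
  under eq_bigr => q _ do rewrite -mulrA.
  by rewrite -mulr_sumr antiR -scalerAr mulr1 scalerA -scalerAr PhiZ mulrC.
rewrite (eq_bigr _ (fun y _ => e2 y)) -scaler_suml -PhiSum.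
by rewrite -mulr_sumr counitR.
Qed.

Lemma adjC v w : \sum_(x <- Delta w) Phi (star v * x.1) *: x.2 =
  \sum_(x <- Delta v) Phi (star x.1 * w) *: star (S x.2).
Proof.
have h := Lid (star w) v.
rewrite (teq_bil (B := fun a b => Phi (a * v) *: b) (starD w)) in h; first last.
- by move=> u; apply: linZ_scal; exact: linZ_idf.
- by move=> u; apply: linZ_lfZ; [exact: Phi_lin | exact: linZ_mull].
rewrite big_map /= in h.
have := congr1 star h; rewrite !star_sum => h'.
transitivity (\sum_(i <- Delta w) star (Phi (star i.1 * v) *: star i.2)).
  by apply: eq_bigr => x _; rewrite starZ starK (herm x.1 v).
by rewrite h'; apply: eq_bigr => x _; rewrite starZ (herm w x.1).
Qed.

End Hopf.

Unset Implicit Arguments.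

Lemma lin_mulc (R : realType) (A : algType R[i]) (f : A -> R[i]) (c : A) :
  lin_fun f -> lin_fun (fun a => f (a * c)).
Proof. by move=> lf k a b; rewrite mulrDl -scalerAl; apply: lf. Qed.

Theorem mainTheorem11 (R : realType) (A : algType R[i])
    (Delta : A -> seq (A * A)) (eps : A -> R[i]) (S : A -> A)
    (star : A -> A) (Phi : A -> R[i]) (B : A -> Prop) :
  is_CQG_Hopf_star Delta eps S star Phi ->
  is_right_coideal_star_subalg Delta star B ->
  is_BRepC Delta eps S star B (fun b a => b * a)
    (fun a => Delta a) (fun a a' => Phi (star a * a')).
Proof.
move=> HH HB; split.
- split.
  + by move=> b k v w _; rewrite mulrDr scalerAr.
  + by move=> b b' k v _ _; rewrite mulrDl scalerAl.
  + by move=> v; rewrite mul1r.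
  + by move=> b b' v _ _; rewrite mulrA.
- split.
  + by move=> k v w f g lf [lg _]; apply: (DeltaL HH).
  + by move=> v f g h lf [lg _] [lh _]; apply: (coass HH).
  + by move=> v; apply: (counitR HH).
- move=> b v s _ bs _ f g lf [lg _] /=.
  rewrite (DeltaM HH b v lf lg) !big_allpairs_dep /= exchange_big /=.
  rewrite [RHS]exchange_big /=; apply: eq_bigr => y _.
  exact: (bs _ _ (@lin_mulc R A f y.1 lf) (@lin_mulc R A g y.2 lg)).
- split.
  + by move=> k u v w; rewrite mulrDr -scalerAr (PhiD HH) (PhiZ HH).
  + by move=> u v; apply: (herm HH).
  + by move=> v v0; apply: (faithful HH).
- split.
  + by move=> b v w _; rewrite (starM HH) (starK HH) mulrA.
  + move=> v w; exists [::]; split; first by [].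
    by rewrite big_nil (adjC HH) subrr.
Qed.
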